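(* Let $V$ be a left vector space over a field $K$ (not necessarily commutative, of arbitrary finite or infinite dimension) such that $\mathcal G\neq\emptyset$. For all $P,Q\in\mathcal G$ the following are equivalent: (a) $P$ and $Q$ are adjacent. (b) There exists $R\in\mathcal G$ with $R\neq P$, $R\neq Q$, such that for every $X\in\mathcal G$: if $X\oplus R=V$ then $X\oplus P=V$ or $X\oplus Q=V$.
   Context: Throughout, $K$ is a (not necessarily commutative) field, i.e. a division ring, and $V$ is a left vector space over $K$ of arbitrary (possibly infinite) dimension. $\mathcal G$ denotes the set of all subspaces $X\le V$ such that $X$ is isomorphic to the quotient space $V/X$ (equivalently, $X$ is isomorphic to one, hence all, of its complements in $V$). Two elements $X,Y\in\mathcal G$ are called distant if they are complementary, i.e. $X\oplus Y=V$ ($X\cap Y=0$ and $X+Y=V$). Two elements $X,Y\in\mathcal G$ are called adjacent (written $X\sim Y$) if $\dim((X+Y)/X)=\dim((X+Y)/Y)=1$. *)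

(* Defs.v *)
From HB Require Import structures.
From mathcomp Require Import all_boot all_order all_algebra.
Set Implicit Arguments. Unset Strict Implicit. Unset Printing Implicit Defensive.
Import GRing.Theory.
Local Open Scope ring_scope.

Definition is_division_ring (K : unitRingType) : Prop :=
  forall x : K, x != 0 -> x \is a GRing.unit.

Section Subspaces.
Variables (K : unitRingType) (V : lmodType K).

Definition is_subspace (X : V -> Prop) : Prop :=
  X 0 /\ (forall u w, X u -> X w -> X (u + w)) /\
  (forall (a : K) u, X u -> X (a *: u)).

Definition sp_eq (X Y : V -> Prop) : Prop := forall v, X v <-> Y v.

Definition sp_sum (X Y : V -> Prop) : V -> Prop :=
  fun v => exists x y, X x /\ Y y /\ v = x + y.

Definition is_linear (f : V -> V) : Prop :=
  forall (a : K) u w, f (a *: u + w) = a *: f u + f w.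

(* X is isomorphic to V/X: there is a linear map V -> V with kernel exactly X
   and image exactly X (first isomorphism theorem: V/ker f ~ im f). *)
Definition iso_quot (X : V -> Prop) : Prop :=
  exists f : V -> V, is_linear f /\
    (forall v, f v = 0 <-> X v) /\
    (forall x, X x <-> exists v, f v = x).

Definition inG (X : V -> Prop) : Prop := is_subspace X /\ iso_quot X.

Definition distant (X Y : V -> Prop) : Prop :=
  (forall v, X v -> Y v -> v = 0) /\ (forall v, sp_sum X Y v).

(* dim((X+Y)/X) = 1: the quotient (X+Y)/X is spanned by the class of one
   vector v in X+Y not in X. *)
Definition codim1_in_sum (X Y : V -> Prop) : Prop :=
  exists v, sp_sum X Y v /\ ~ X v /\
    forall w, sp_sum X Y w -> exists k : K, X (w - k *: v).

Definition adjacent (X Y : V -> Prop) : Prop :=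
  codim1_in_sum X Y /\ codim1_in_sum Y X.

End Subspaces.

(* Main.v *)
Require Import Defs.
From HB Require Import structures.
From mathcomp Require Import all_boot all_order all_algebra.
From mathcomp Require Import boolp classical_sets.
From Stdlib Require Import ClassicalEpsilon.
Import GRing.Theory.
Local Open Scope ring_scope.

Section Basics.
Variables (K : unitRingType) (V : lmodType K).
Hypothesis HK : is_division_ring K.

Lemma ss0 (X : V -> Prop) : is_subspace X -> X 0.
Proof. by case. Qed.
Lemma ssD (X : V -> Prop) u w : is_subspace X -> X u -> X w -> X (u + w).
Proof. by case=> _ [H _]; apply: H. Qed.
Lemma ssZ (X : V -> Prop) (a : K) u : is_subspace X -> X u -> X (a *: u).
Proof. by case=> _ [_ H]; apply: H. Qed.
Lemma ssN (X : V -> Prop) u : is_subspace X -> X u -> X (- u).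
Proof. by move=> sX Xu; rewrite -scaleN1r; apply: ssZ. Qed.
Lemma ssB (X : V -> Prop) u w : is_subspace X -> X u -> X w -> X (u - w).
Proof. by move=> sX Xu Xw; apply: ssD => //; apply: ssN. Qed.

Lemma scale_eq0 (a : K) (v : V) : a *: v = 0 -> a = 0 \/ v = 0.
Proof.
move=> h; case: (eqVneq a 0) => [->|a0]; [by left|right].
have /HK ua := a0.
by rewrite -[v]scale1r -(mulVr ua) -scalerA h scaler0.
Qed.

Lemma scaleK' (a : K) (v : V) : a != 0 -> a^-1 *: (a *: v) = v.
Proof. by move=> /HK ua; rewrite scalerA mulVr // scale1r. Qed.

Lemma sum_ss (X Y : V -> Prop) : is_subspace X -> is_subspace Y ->
  is_subspace (sp_sum X Y).
Proof.
move=> sX sY; split.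
  by exists 0, 0; split; [exact: ss0 sX|split; [exact: ss0 sY|rewrite addr0]].
split.
  move=> u w [x1 [y1 [X1 [Y1 ->]]]] [x2 [y2 [X2 [Y2 ->]]]].
  exists (x1 + x2), (y1 + y2); split; first exact: ssD sX X1 X2.
  split; first exact: ssD sY Y1 Y2.
  by rewrite addrACA.
move=> a u [x [y [Xx [Yy ->]]]]; exists (a *: x), (a *: y).
split; first exact: ssZ sX Xx.
by split; [exact: ssZ sY Yy|rewrite scalerDr].
Qed.

Definition line (p : V) : V -> Prop := fun v => exists a : K, v = a *: p.

Lemma line_ss p : is_subspace (line p).
Proof.
split; first by exists 0; rewrite scale0r.
split; first by move=> u w [a ->] [b ->]; exists (a + b); rewrite scalerDl.
by move=> c u [a ->]; exists (c * a); rewrite scalerA.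
Qed.

Definition good (R S T : V -> Prop) :=
  is_subspace T /\ (forall v, S v -> T v) /\ (forall v, T v -> R v -> v = 0).

Lemma ext_compl (R S : V -> Prop) : is_subspace R -> is_subspace S ->
  (forall v, S v -> R v -> v = 0) ->
  exists T, is_subspace T /\ (forall v, S v -> T v) /\ distant T R.
Proof.
move=> sR sS SR.
pose Fam : set (set V) := fun T => T = set0 \/ good R S T.
have [A [FA Amax]] : exists A : set V, Fam A /\ (forall B, proper A B -> ~ Fam B).
  apply: Zorn_bigcup => F FP Ftot.
  case: (pselect (exists T, F T /\ good R S T)) => [[T0 [FT0 gT0]]|nE]; last first.
    left; apply/seteqP; split => // v [T FT Tv]; exfalso; apply: nE; exists T; split => //.
    by case: (FP T FT) => // ET; rewrite ET in Tv.
  right.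
  have memg : forall T v, F T -> T v -> good R S T.
    by move=> T v FT Tv; case: (FP T FT) => // ET; rewrite ET in Tv.
  split; last split.
  - split; first by exists T0 => //; case: gT0 => ? _; apply: ss0.
    split.
    + move=> u w [T1 F1 T1u] [T2 F2 T2w].
      case: (Ftot _ _ F1 F2) => sub.
      * exists T2 => //; apply: ssD; first by case: (memg _ _ F2 T2w).
        by apply: sub. done.
      * exists T1 => //; apply: ssD; first by case: (memg _ _ F1 T1u).
        done. by apply: sub.
    + move=> a u [T1 F1 T1u]; exists T1 => //; apply: ssZ => //.
      by case: (memg _ _ F1 T1u).
  - by move=> v Sv; exists T0 => //; case: gT0 => _ [H _]; apply: H.
  - move=> v [T1 F1 T1v] Rv; case: (memg _ _ F1 T1v) => _ [_ H]; exact: H.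
have gA : good R S A.
  case: FA => // A0; exfalso; apply: (Amax S).
    rewrite A0; split; first by move=> x [].
    by move=> /(_ 0) h; apply: h; apply: ss0.
  by right; split; [exact: sS|split; [done|exact: SR]].
case: gA => sA [SA AR]; exists A; split => //; split => //; split => //.
move=> v; apply: NNPP => nv.
pose B := sp_sum A (line v).
apply: (Amax B).
  split; first by move=> x Ax; exists x, 0; split => //; split; [exact: ss0 (line_ss v)| rewrite addr0].
  move=> BA; apply: nv; exists v, 0; split; last split.
  - apply: BA; exists 0, v; split; first exact: ss0.
    by split; [exists 1; rewrite scale1r|rewrite add0r].
  - exact: ss0.
  - by rewrite addr0.
right; split; first by apply: sum_ss => //; apply: line_ss.
split; first by move=> x Sx; exists x, 0; split; [exact: SA|split; [exact: ss0 (line_ss v)|rewrite addr0]].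
move=> w [x [y [Ax [[a ->] ->]]]] Rw.
case: (eqVneq a 0) => [a0|a0].
  move: Rw; rewrite a0 scale0r addr0 => Rx; exact: AR.
exfalso; apply: nv.
exists (- (a^-1 *: x)), (a^-1 *: (x + a *: v)); split; first by apply: ssN => //; apply: ssZ.
split; first by apply: ssZ.
by rewrite scalerDr scaleK' // addrA addNr add0r.
Qed.


Lemma subBB (v a b : V) : (v - a) - (v - b) = b - a.
Proof. by rewrite opprB addrC addrA subrK. Qed.

Section Lin.
Variable f : V -> V.
Hypothesis Hf : is_linear f.
Lemma lin0 : f 0 = 0.
Proof.
have h := Hf 1 0 0; rewrite scaler0 addr0 scale1r in h.
have: f 0 + f 0 = f 0 + 0 by rewrite addr0 -h.
by move/addrI.
Qed.
Lemma linZ a u : f (a *: u) = a *: f u.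
Proof. by have := Hf a u 0; rewrite !addr0 lin0 addr0. Qed.
Lemma linD u w : f (u + w) = f u + f w.
Proof. by have := Hf 1 u w; rewrite !scale1r. Qed.
Lemma linN u : f (- u) = - f u.
Proof. by rewrite -scaleN1r linZ scaleN1r. Qed.
Lemma linB u w : f (u - w) = f u - f w.
Proof. by rewrite linD linN. Qed.
End Lin.

Definition eps {A : Type} (a : A) (P : A -> Prop) := epsilon (inhabits a) P.
Lemma epsP {A : Type} (a : A) (P : A -> Prop) : (exists x, P x) -> P (eps a P).
Proof. exact: epsilon_spec. Qed.

Lemma compl_inG (R X : V -> Prop) : inG R -> is_subspace X -> distant X R -> inG X.
Proof.
move=> [sR [f [Hf [ker im]]]] sX [XR XRV].
split => //.
pose pi v := eps 0 (fun r => R r /\ X (v - r)).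
have piP v : R (pi v) /\ X (v - pi v).
  apply: (@epsP _ 0 (fun r => R r /\ X (v - r))); case: (XRV v) => x [r [Xx [Rr ->]]]; exists r; split => //.
  by rewrite addrK.
have piU v r : R r -> X (v - r) -> pi v = r.
  move=> Rr Xr; case: (piP v) => Rp Xp.
  apply/eqP; rewrite eq_sym -subr_eq0; apply/eqP; apply: XR.
    by rewrite -(subBB v); apply: ssB.
  exact: ssB.
have fR r : R r -> f r = 0 by move=> Rr; apply/ker.
pose g r := eps 0 (fun x => X x /\ f x = r).
have gP r : R r -> X (g r) /\ f (g r) = r.
  move=> Rr; apply: (@epsP _ 0 (fun x => X x /\ f x = r)); case: (im r) => /(_ Rr) [v fv] _.
  case: (XRV v) => x [r' [Xx [Rr' ev]]]; exists x; split => //.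
  by rewrite -fv ev (linD _ Hf) (fR _ Rr') addr0.
have gU r x : X x -> f x = r -> g r = x.
  move=> Xx fx; have Rr : R r by apply/im; exists x.
  case: (gP r Rr) => Xg fg.
  apply/eqP; rewrite -subr_eq0; apply/eqP; apply: XR; first exact: ssB.
  by apply/ker; rewrite (linB _ Hf) fg fx subrr.
exists (fun v => g (pi v)); split; last split.
- move=> a u w.
  have Rpu := (piP u).1; have Rpw := (piP w).1.
  have -> : pi (a *: u + w) = a *: pi u + pi w.
    apply: piU; first by apply: ssD => //; apply: ssZ.
    have -> : a *: u + w - (a *: pi u + pi w) = a *: (u - pi u) + (w - pi w).
      by rewrite scalerBr opprD addrACA.
    by apply: ssD => //; [apply: ssZ => //; exact: (piP u).2|exact: (piP w).2].
  apply: gU.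
    by apply: ssD => //; [apply: ssZ => //; exact: (gP _ Rpu).1|exact: (gP _ Rpw).1].
  by rewrite Hf (gP _ Rpu).2 (gP _ Rpw).2.
- move=> v; split.
  + move=> h; case: (gP _ (piP v).1) => _; rewrite h (lin0 _ Hf) => e.
    by have := (piP v).2; rewrite -e subr0.
  + move=> Xv; have -> : pi v = 0 by apply: piU; [exact: ss0|rewrite subr0].
    by apply: gU; [exact: ss0|exact: lin0].
- move=> x; split.
  + move=> Xx; exists (f x).
    have Rf : R (f x) by apply/im; exists x.
    have -> : pi (f x) = f x by apply: piU => //; rewrite subrr; exact: ss0.
    exact: gU.
  + by move=> [v <-]; exact: (gP _ (piP v).1).1.
Qed.


Lemma idA (a x y : K) (u w p : V) :
  a *: u + w - (a * x + y) *: p = a *: (u - x *: p) + (w - y *: p).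
Proof. by rewrite scalerDl -scalerA scalerBr opprD addrACA. Qed.
Lemma idA' (a x y : K) (u w p : V) :
  a *: u + w + (a * x + y) *: p = a *: (u + x *: p) + (w + y *: p).
Proof. by rewrite scalerDl -scalerA scalerDr addrACA. Qed.

Definition flin (lam : V -> K) := forall a u w, lam (a *: u + w) = a * lam u + lam w.

Lemma flin0 lam : flin lam -> lam 0 = 0.
Proof.
move=> Hl; have h := Hl 1 0 0; rewrite scaler0 addr0 mul1r in h.
have: lam 0 + lam 0 = lam 0 + 0 by rewrite addr0 -h.
by move/addrI.
Qed.

Lemma functional (Q : V -> Prop) p : is_subspace Q -> ~ Q p ->
  exists lam : V -> K, flin lam /\ (forall v, Q v -> lam v = 0) /\ lam p = 1.
Proof.
move=> sQ nQp.
have p0 : p != 0 by apply/eqP => e; apply: nQp; rewrite e; exact: ss0.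
have [H [sH [QH [HL HLV]]]] : exists H, is_subspace H /\ (forall v, Q v -> H v) /\ distant H (line p).
  apply: ext_compl => //; first exact: line_ss.
  move=> v Qv [a ev]; case: (eqVneq a 0) => [a0|a0]; first by rewrite ev a0 scale0r.
  by exfalso; apply: nQp; rewrite -(@scaleK' a p a0) -ev; apply: ssZ.
pose lam v := eps 0 (fun a => H (v - a *: p)).
have lamP v : H (v - lam v *: p).
  apply: (@epsP _ 0 (fun a => H (v - a *: p))).
  case: (HLV v) => h [y [Hh [[a ->] ->]]]; exists a; by rewrite addrK.
have lamU v a : H (v - a *: p) -> lam v = a.
  move=> Ha; have: (lam v - a) *: p = 0.
    apply: HL; last by exists (lam v - a).
    have -> : (lam v - a) *: p = (v - a *: p) - (v - lam v *: p) by rewrite subBB scalerBl.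
    exact: ssB.
  case/scale_eq0 => [/eqP|e]; first by rewrite subr_eq0 => /eqP.
  by move: p0; rewrite e eqxx.
exists lam; split; last split.
- move=> a u w; apply: lamU; rewrite idA.
  apply: (@ssD H _ _ sH); [apply: (@ssZ H _ _ sH); exact: lamP|exact: lamP].
- by move=> v Qv; apply: lamU; rewrite scale0r subr0; apply: QH.
- by apply: lamU; rewrite scale1r subrr; exact: ss0.
Qed.

Lemma twist_inG (P : V -> Prop) lam q : inG P -> flin lam -> lam q = 0 ->
  inG (fun v => P (v - lam v *: q)).
Proof.
move=> [sP [f [Hf [ker im]]]] Hl lq.
pose sg v := v + lam v *: q.
pose si v := v - lam v *: q.
have Hsg : is_linear sg by move=> a u w; rewrite /sg Hl idA'.
have Hsi : is_linear si by move=> a u w; rewrite /si Hl idA.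
have lsg v : lam (sg v) = lam v.
  by have := Hl (lam v) q v; rewrite lq mulr0 add0r addrC.
have lsi v : lam (si v) = lam v.
  have := Hl (- lam v) q v; rewrite lq mulr0 add0r addrC.
  by rewrite scaleNr.
have sisg v : si (sg v) = v by rewrite /si lsg /sg addrK.
have sgsi v : sg (si v) = v by rewrite /sg lsi /si subrK.
split.
  split; first by change (P (si 0)); rewrite (lin0 _ Hsi); exact: ss0.
  split.
    move=> u w Pu Pw; change (P (si (u + w))).
    by have := Hsi 1 u w; rewrite !scale1r => ->; apply: ssD.
  by move=> a u Pu; change (P (si (a *: u))); rewrite (linZ _ Hsi); apply: ssZ.
exists (fun v => sg (f (si v))); split; last split.
- move=> a u w; by rewrite Hsi Hf Hsg.
- move=> v; change (sg (f (si v)) = 0 <-> P (si v)); rewrite -ker; split.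
    by move=> h; rewrite -(sisg (f (si v))) h (lin0 _ Hsi).
  by move=> ->; exact: (lin0 _ Hsg).
- move=> x; change (P (si x) <-> exists v, sg (f (si v)) = x); rewrite im; split.
    by move=> [w fw]; exists (sg w); rewrite sisg fw sgsi.
  by move=> [v <-]; exists (si v); rewrite sisg.
Qed.


Lemma sumL (X Y : V -> Prop) x : is_subspace Y -> X x -> sp_sum X Y x.
Proof. by move=> sY Xx; exists x, 0; split => //; split; [exact: ss0|rewrite addr0]. Qed.
Lemma sumR (X Y : V -> Prop) y : is_subspace X -> Y y -> sp_sum X Y y.
Proof. by move=> sX Yy; exists 0, y; split; [exact: ss0|split => //; rewrite add0r]. Qed.
Lemma sum_comm (X Y : V -> Prop) v : sp_sum X Y v -> sp_sum Y X v.
Proof. by move=> [x [y [Xx [Yy ->]]]]; exists y, x; rewrite addrC. Qed.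

Lemma key (N R X A : V -> Prop) (q z x r : V) :
  is_subspace N -> is_subspace R -> is_subspace X -> is_subspace A ->
  (forall v, A v -> N v) -> (forall v, R v -> N v) ->
  (forall w, N w -> exists r' c, R r' /\ w = r' + c *: q) ->
  X x -> R r -> q = x + r -> N x -> ~ A x ->
  (forall w, N w -> exists k, A (w - k *: z)) ->
  distant X R -> distant X A.
Proof.
move=> sN sR sX sA AN RN NRq Xx Rr eq Nx nAx NAz [XR XRV]; split.
  move=> y Xy Ay; have [r' [c [Rr' ey]]] := NRq y (AN y Ay).
  have e1 : y - c *: x = r' + c *: r by rewrite ey eq scalerDr addrA addrAC addrK.
  have : y - c *: x = 0 by apply: XR; [apply: ssB => //; apply: ssZ|rewrite e1; apply: ssD => //; apply: ssZ].
  move/eqP; rewrite subr_eq0 => /eqP eyc.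
  case: (eqVneq c 0) => [c0|c0]; first by rewrite eyc c0 scale0r.
  by exfalso; apply: nAx; rewrite -(@scaleK' c x c0) -eyc; apply: ssZ.
have sXA := sum_ss _ _ sX sA.
have [d Ad] := NAz x Nx.
have d0 : d != 0 by apply/eqP => d0; apply: nAx; move: Ad; rewrite d0 scale0r subr0.
have Xz : sp_sum X A z.
  have -> : z = d^-1 *: (x - (x - d *: z)) by rewrite opprB addrC subrK scaleK'.
  by apply: ssZ => //; apply: ssB => //; [apply: sumL|apply: sumR].
move=> v; case: (XRV v) => x0 [r0 [Xx0 [Rr0 ->]]].
apply: ssD => //; first by apply: sumL.
have [k Ak] := NAz r0 (RN r0 Rr0).
have -> : r0 = (r0 - k *: z) + k *: z by rewrite subrK.
by apply: ssD => //; [apply: sumR|apply: ssZ].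
Qed.

Lemma extract (A B : V -> Prop) : is_subspace A -> is_subspace B -> codim1_in_sum A B ->
  exists z, B z /\ ~ A z /\ forall w, sp_sum A B w -> exists k, A (w - k *: z).
Proof.
move=> sA sB [v [[a [b [Aa [Bb ev]]]] [nAv H]]].
exists b; split => //; split.
  by move=> Ab; apply: nAv; rewrite ev; apply: ssD.
move=> w /H [k Ak]; exists k.
have -> : w - k *: b = (w - k *: v) + k *: a by rewrite ev scalerDr opprD addrA addrAC subrK.
by apply: ssD => //; apply: ssZ.
Qed.

Lemma a_to_b (P Q : V -> Prop) : inG P -> inG Q -> adjacent P Q ->
  exists R : V -> Prop, inG R /\ ~ sp_eq R P /\ ~ sp_eq R Q /\
    forall X : V -> Prop, inG X -> distant X R -> distant X P \/ distant X Q.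
Proof.
move=> GP GQ [c1 c2].
have sP := GP.1; have sQ := GQ.1.
have [q [Qq [nPq Hq]]] := extract _ _ sP sQ c1.
have [p [Pp [nQp Hp']]] := extract _ _ sQ sP c2.
have Hp : forall w, sp_sum P Q w -> exists k, Q (w - k *: p).
  by move=> w /sum_comm; apply: Hp'.
have [lam [Hl [lQ lp]]] := functional _ _ sQ nQp.
have lq := lQ q Qq.
pose R := fun v => P (v - lam v *: q).
have GR : inG R := twist_inG _ _ _ GP Hl lq.
have sR := GR.1.
have sN := sum_ss _ _ sP sQ.
have lpq : lam (p + q) = 1 by have := Hl 1 p q; rewrite scale1r mul1r lp lq addr0.
have Rpq : R (p + q) by rewrite /R lpq scale1r addrK.
exists R; split => //; split.
  move=> /(_ (p + q)) [/(_ Rpq) Ppq _]; apply: nPq.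
  by have := ssB _ _ _ sP Ppq Pp; rewrite addrAC subrr add0r.
split.
  move=> /(_ (p + q)) [/(_ Rpq) Qpq _]; apply: nQp.
  by have := ssB _ _ _ sQ Qpq Qq; rewrite addrK.
move=> X GX dXR.
have sX := GX.1.
have RN : forall v, R v -> sp_sum P Q v.
  move=> v Rv; have -> : v = (v - lam v *: q) + lam v *: q by rewrite subrK.
  by apply: ssD => //; [apply: sumL|apply: sumR => //; apply: ssZ].
have PQR : forall v, P v -> Q v -> R v by move=> v Pv Qv; rewrite /R lQ // scale0r subr0.
have NRq : forall w, sp_sum P Q w -> exists r' c, R r' /\ w = r' + c *: q.
  move=> w Nw; have [k Pk] := Hq w Nw.
  exists ((w - k *: q) + lam (w - k *: q) *: q), (k - lam (w - k *: q)); split.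
    rewrite /R; have := Hl 1 (w - k *: q) (lam (w - k *: q) *: q).
    rewrite scale1r mul1r => ->; have := Hl (lam (w - k *: q)) q 0.
    by rewrite addr0 (flin0 _ Hl) addr0 lq mulr0 => ->; rewrite addr0 addrK.
  by rewrite scalerBl addrA addrAC addrK subrK.
have [XR XRV] := dXR.
case: (XRV q) => x [r [Xx [Rr eq]]].
have Nx : sp_sum P Q x.
  have -> : x = q - r by rewrite eq addrK.
  by apply: ssB => //; [apply: sumR|apply: RN].
have nPQ : ~ P x \/ ~ Q x.
  case: (classic (P x)) => Px; last by left.
  case: (classic (Q x)) => Qx; last by right.
  exfalso; have x0 : x = 0 by apply: XR => //; apply: PQR.
  have rq : r = q by rewrite eq x0 add0r.
  by apply: nPq; move: Rr; rewrite rq /R lq scale0r subr0.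
case: nPQ => nx.
  left; apply: (key _ _ _ _ _ _ _ _ sN sR sX sP _ RN NRq Xx Rr eq Nx nx Hq dXR).
  by move=> v Pv; apply: sumL.
right; apply: (key _ _ _ _ _ _ _ _ sN sR sX sQ _ RN NRq Xx Rr eq Nx nx Hp dXR).
by move=> v Qv; apply: sumR.
Qed.


Section BA.
Variables (P Q R : V -> Prop).
Hypotheses (GP : inG P) (GQ : inG Q) (GR : inG R).
Hypotheses (nRP : ~ sp_eq R P) (nRQ : ~ sp_eq R Q).
Hypothesis H : forall X : V -> Prop, inG X -> distant X R -> distant X P \/ distant X Q.

Let sP := GP.1.
Let sQ := GQ.1.
Let sR := GR.1.

Lemma E0 (S : V -> Prop) : is_subspace S -> (forall v, S v -> R v -> v = 0) ->
  exists X, inG X /\ (forall v, S v -> X v) /\ distant X R.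
Proof.
move=> sS SR; have [X [sX [SX dX]]] := ext_compl _ _ sR sS SR.
by exists X; split => //; apply: (compl_inG _ _ GR).
Qed.

Lemma notR0 u : ~ R u -> u != 0.
Proof. by move=> nR; apply/eqP => e; apply: nR; rewrite e; exact: ss0. Qed.

Lemma E1 u : ~ R u -> exists X, inG X /\ X u /\ distant X R.
Proof.
move=> nRu.
have SR : forall v, line u v -> R v -> v = 0.
  move=> v [a ->] Ra; case: (eqVneq a 0) => [->|a0]; first by rewrite scale0r.
  by exfalso; apply: nRu; rewrite -(@scaleK' a u a0); apply: ssZ.
have [X [GX [SX dX]]] := E0 _ (line_ss u) SR.
by exists X; split => //; split => //; apply: SX; exists 1; rewrite scale1r.
Qed.

Lemma L0 (A : V -> Prop) : is_subspace A -> ~ sp_eq R A ->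
  exists X, inG X /\ distant X R /\ ~ distant X A.
Proof.
move=> sA nRA.
case: (classic (exists u, A u /\ ~ R u)) => [[u [Au nRu]]|nE].
  have [X [GX [Xu dX]]] := E1 _ nRu; exists X; split => //; split => // [[XA _]].
  by have := notR0 _ nRu; rewrite (XA u Xu Au) eqxx.
have AR : forall u, A u -> R u.
  by move=> u Au; apply: NNPP => nRu; apply: nE; exists u.
have [r [Rr nAr]] : exists r, R r /\ ~ A r.
  apply: NNPP => nE2; apply: nRA => v; split; last by apply: AR.
  by move=> Rv; apply: NNPP => nAv; apply: nE2; exists v.
have SR0 : forall v, line 0 v -> R v -> v = 0 by move=> v [a ->] _; rewrite scaler0.
have [X [GX [_ dX]]] := E0 _ (line_ss 0) SR0.
exists X; split => //; split => // [[_ XAV]].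
case: (XAV r) => x [a [Xx [Aa er]]].
have x0 : x = 0.
  apply: dX.1 => //; have -> : x = r - a by rewrite er addrK.
  by apply: ssB => //; apply: AR.
by apply: nAr; rewrite er x0 add0r.
Qed.

Lemma EP : exists X, inG X /\ distant X R /\ distant X P.
Proof.
have [X [GX [dX ndQ]]] := L0 _ sQ nRQ.
by exists X; split => //; split => //; case: (H _ GX dX).
Qed.

Lemma EQ : exists X, inG X /\ distant X R /\ distant X Q.
Proof.
have [X [GX [dX ndP]]] := L0 _ sP nRP.
by exists X; split => //; split => //; case: (H _ GX dX).
Qed.

Lemma outside (A : V -> Prop) : is_subspace A -> ~ sp_eq R A ->
  (exists X, inG X /\ distant X R /\ distant X A) -> exists u, A u /\ ~ R u.
Proof.
move=> sA nRA [X [GX [[XR _] [_ XAV]]]]; apply: NNPP => nE.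
have AR : forall u, A u -> R u.
  by move=> u Au; apply: NNPP => nRu; apply: nE; exists u.
apply: nRA => v; split; last by apply: AR.
move=> Rv; case: (XAV v) => x [a [Xx [Aa ev]]].
have x0 : x = 0.
  apply: XR => //; have -> : x = v - a by rewrite ev addrK.
  by apply: ssB => //; apply: AR.
by rewrite ev x0 add0r.
Qed.

Lemma G1 y : P y -> Q y -> R y.
Proof.
move=> Py Qy; apply: NNPP => nRy.
have [X [GX [Xy dX]]] := E1 _ nRy.
have y0 := notR0 _ nRy.
by case: (H _ GX dX) => [[XA _]|[XA _]]; [move: y0; rewrite (XA y Xy Py) eqxx|move: y0; rewrite (XA y Xy Qy) eqxx].
Qed.

Lemma G3 u w : P u -> ~ R u -> Q w -> ~ R w -> exists c, R (u + c *: w).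
Proof.
move=> Pu nRu Qw nRw; apply: NNPP => nE.
have sS := sum_ss _ _ (line_ss u) (line_ss w).
have SR : forall v, sp_sum (line u) (line w) v -> R v -> v = 0.
  move=> v [x [y [[a ->] [[b ->] ->]]]] Rv.
  case: (eqVneq a 0) => [a0|a0].
    move: Rv; rewrite a0 scale0r add0r => Rb.
    case: (eqVneq b 0) => [->|b0]; first by rewrite scale0r.
    by exfalso; apply: nRw; rewrite -(@scaleK' b w b0); apply: ssZ.
  exfalso; apply: nE; exists (a^-1 * b).
  have -> : u + (a^-1 * b) *: w = a^-1 *: (a *: u + b *: w) by rewrite scalerDr scaleK' // scalerA.
  exact: ssZ.
have [X [GX [SX dX]]] := E0 _ sS SR.
  have Xu : X u by apply: SX; apply: sumL; [exact: line_ss|exists 1; rewrite scale1r].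
  have Xw : X w by apply: SX; apply: sumR; [exact: line_ss|exists 1; rewrite scale1r].
  case: (H _ GX dX) => [[XA _]|[XA _]].
    by have := notR0 _ nRu; rewrite (XA u Xu Pu) eqxx.
  by have := notR0 _ nRw; rewrite (XA w Xw Qw) eqxx.
Qed.

Lemma u0ex : exists u0, P u0 /\ ~ R u0.
Proof. exact: outside _ sP nRP EP. Qed.
Lemma w0ex : exists w0, Q w0 /\ ~ R w0.
Proof. exact: outside _ sQ nRQ EQ. Qed.

Lemma c0nz u0 w0 c0 : ~ R u0 -> R (u0 + c0 *: w0) -> c0 != 0.
Proof. by move=> nR Rc; apply/eqP => e; apply: nR; move: Rc; rewrite e scale0r addr0. Qed.

Lemma oneP u0 : P u0 -> ~ R u0 -> forall u, P u -> exists k, R (u - k *: u0).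
Proof.
move=> Pu0 nRu0 u Pu; have [w0 [Qw0 nRw0]] := w0ex.
case: (classic (R u)) => Ru; first by exists 0; rewrite scale0r subr0.
have [c Rc] := G3 _ _ Pu Ru Qw0 nRw0.
have [c0 Rc0] := G3 _ _ Pu0 nRu0 Qw0 nRw0.
have c0n := c0nz _ _ _ nRu0 Rc0.
exists (c * c0^-1).
have -> : u - (c * c0^-1) *: u0 = (u + c *: w0) - (c * c0^-1) *: (u0 + c0 *: w0).
  rewrite scalerDr scalerA divrK; last exact: HK.
  by rewrite opprD addrACA subrr addr0.
by apply: ssB => //; apply: ssZ.
Qed.

Lemma oneQ w0 : Q w0 -> ~ R w0 -> forall y, Q y -> exists k, R (y - k *: w0).
Proof.
move=> Qw0 nRw0 y Qy; have [u0 [Pu0 nRu0]] := u0ex.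
case: (classic (R y)) => Ry; first by exists 0; rewrite scale0r subr0.
have [c Rc] := G3 _ _ Pu0 nRu0 Qy Ry.
have [c0 Rc0] := G3 _ _ Pu0 nRu0 Qw0 nRw0.
have cn := c0nz _ _ _ nRu0 Rc.
exists (c^-1 * c0).
have -> : y - (c^-1 * c0) *: w0 = c^-1 *: ((u0 + c *: y) - (u0 + c0 *: w0)).
  by rewrite opprD addrACA subrr add0r scalerBr scaleK' // scalerA.
by apply: ssZ => //; apply: ssB.
Qed.

Lemma L1 X u0 : inG X -> distant X R -> distant X P -> P u0 -> ~ R u0 ->
  forall y, R y -> ~ P y -> forall r, R r -> exists k, P (r - k *: y).
Proof.
move=> [sX _] [XR _] [_ XPV] Pu0 nRu0 y Ry nPy r Rr.
case: (XPV r) => x1 [p1 [Xx1 [Pp1 er]]].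
case: (XPV y) => x2 [p2 [Xx2 [Pp2 ey]]].
have [k1 Rk1] := oneP _ Pu0 nRu0 _ Pp1.
have [k2 Rk2] := oneP _ Pu0 nRu0 _ Pp2.
have R1 : R (x1 + k1 *: u0).
  have -> : x1 + k1 *: u0 = r - (p1 - k1 *: u0) by rewrite er opprB addrA addrAC addrK.
  exact: ssB.
have R2 : R (x2 + k2 *: u0).
  have -> : x2 + k2 *: u0 = y - (p2 - k2 *: u0) by rewrite ey opprB addrA addrAC addrK.
  exact: ssB.
have k2n : k2 != 0.
  apply/eqP => e; apply: nPy.
  have x20 : x2 = 0 by apply: XR => //; move: R2; rewrite e scale0r addr0.
  by rewrite ey x20 add0r.
exists (k1 * k2^-1).
have x1e : x1 = (k1 * k2^-1) *: x2.
  apply/eqP; rewrite -subr_eq0; apply/eqP; apply: XR.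
    by apply: ssB => //; apply: ssZ.
  have -> : x1 - (k1 * k2^-1) *: x2 = (x1 + k1 *: u0) - (k1 * k2^-1) *: (x2 + k2 *: u0).
    rewrite scalerDr scalerA divrK; last exact: HK.
    by rewrite opprD addrACA subrr addr0.
  by apply: ssB => //; apply: ssZ.
have -> : r - (k1 * k2^-1) *: y = p1 - (k1 * k2^-1) *: p2.
  by rewrite er ey x1e scalerDr opprD addrACA subrr add0r.
by apply: ssB => //; apply: ssZ.
Qed.

Lemma QRP y : Q y -> R y -> P y.
Proof.
move=> Qy Ry; apply: NNPP => nPy.
have [u0 [Pu0 nRu0]] := u0ex; have [w0 [Qw0 nRw0]] := w0ex.
have [c0 Rc0] := G3 _ _ Pu0 nRu0 Qw0 nRw0.
have c0n := c0nz _ _ _ nRu0 Rc0.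
have [X [GX [dR dP]]] := EP.
have [k Pk] := L1 _ _ GX dR dP Pu0 nRu0 _ Ry nPy _ Rc0.
have Pt : P (c0 *: w0 - k *: y).
  have -> : c0 *: w0 - k *: y = ((u0 + c0 *: w0) - k *: y) - u0.
    by rewrite addrAC [u0 + _]addrC addrK.
  exact: ssB.
have Qt : Q (c0 *: w0 - k *: y) by apply: ssB => //; apply: ssZ.
have Rt := G1 _ Pt Qt.
apply: nRw0; rewrite -(@scaleK' c0 w0 c0n); apply: ssZ => //.
have -> : c0 *: w0 = (c0 *: w0 - k *: y) + k *: y by rewrite subrK.
by apply: ssD => //; apply: ssZ.
Qed.

Lemma half : codim1_in_sum P Q.
Proof.
have [w0 [Qw0 nRw0]] := w0ex.
exists w0; split; first exact: sumR.
split; first by move=> Pw0; apply: nRw0; apply: G1.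
move=> w [x [y [Px [Qy ->]]]].
have [k Rk] := oneQ _ Qw0 nRw0 _ Qy.
exists k; rewrite -addrA; apply: ssD => //; apply: QRP => //.
by apply: ssB => //; apply: ssZ.
Qed.

End BA.

End Basics.

Theorem theorem3p1 (K : unitRingType) (V : lmodType K)
  (HK : is_division_ring K)
  (HG : exists X : V -> Prop, inG X) :
  forall P Q : V -> Prop, inG P -> inG Q ->
    (adjacent P Q <->
     exists R : V -> Prop, inG R /\ ~ sp_eq R P /\ ~ sp_eq R Q /\
       forall X : V -> Prop, inG X ->
         distant X R -> distant X P \/ distant X Q).
Proof.
move=> P Q GP GQ; split.
  exact: (@a_to_b K V HK P Q GP GQ).
move=> [R [GR [nRP [nRQ H]]]]; split.
  exact: (@half K V HK P Q R GP GQ GR nRP nRQ H).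
apply: (@half K V HK Q P R GQ GP GR nRQ nRP) => X GX dX.
by case: (H X GX dX); [right|left].
Qed.
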